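(* Let $p$ be a prime, $m\ge1$, $s\ge0$ integers, $R^4=\mathbb{F}_{p^m}[u]/\langle u^4\rangle$, $f(x)\in\mathbb{F}_{p^m}[x]$ irreducible, $\omega(x)=f(x)^{p^s}$, $R^{4,\omega}=R^4[x]/\langle\omega(x)\rangle$ and $R^{1,\omega}=\mathbb{F}_{p^m}[x]/\langle\omega(x)\rangle$. Let $a,t$ be integers with $0\le t<a\le p^s-1$, and let $h(x)\in R^{1,\omega}$ be either $0$ or a unit of $R^{1,\omega}$. Let $L$ be the smallest non-negative integer such that $u^3f(x)^L\in\langle u^2f(x)^a+u^3f(x)^t h(x)\rangle$ (ideal of $R^{4,\omega}$). Then $$L=\begin{cases} a & \text{if } h(x)=0,\\ \min\{a,\ p^s-a+t\} & \text{if } h(x)\ne0.\end{cases}$$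
   Context: $R^{1,\omega}$ is identified with the subring of $R^{4,\omega}$ consisting of classes of polynomials over $\mathbb{F}_{p^m}$ (no $u$). *)

(* Defs.v *)
From HB Require Import structures.
From mathcomp Require Import all_boot all_order all_algebra.
Set Implicit Arguments. Unset Strict Implicit. Unset Printing Implicit Defensive.
Import GRing.Theory.
Local Open Scope ring_scope.

(* R^{1,w} = F[x]/<w(x)>, and R^{4,w} = (F[u]/<u^4>)[x]/<w(x)>
   which we represent through lifts: an element of R^{4,w} is represented by
   a polynomial in {poly {poly F}}, where the OUTER variable 'X is u and the
   coefficients are polynomials in x.  R^{4,w} is the quotient of this ring
   by the ideal <u^4, w(x)>. *)

Definition in_R4w_ideal (F : fieldType) (w : {poly F}) (g y : {poly {poly F}}) : Prop :=
  exists r q1 q2 : {poly {poly F}}, y = r * g + q1 * 'X^4 + q2 * w%:P.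

Definition R1w_zero (F : fieldType) (w h : {poly F}) : bool := w %| h.

Definition R1w_unit (F : fieldType) (w h : {poly F}) : Prop :=
  exists k : {poly F}, w %| h * k - 1.

(* Main.v *)
Require Import Defs.
From HB Require Import structures.
From mathcomp Require Import all_boot all_order all_algebra.
From mathcomp Require Import ring.
Import GRing.Theory.
Local Open Scope ring_scope.

Lemma coef_eqs (F : fieldType) (w A B c : {poly F}) (r q1 q2 : {poly {poly F}}) :
  'X^3 * c%:P = r * ('X^2 * A%:P + 'X^3 * B%:P) + q1 * 'X^4 + q2 * w%:P ->
  0 = r`_0 * A + q2`_2 * w /\ c = r`_1 * A + r`_0 * B + q2`_3 * w.
Proof.
move=> E; split.
- have := congr1 (fun p : {poly {poly F}} => p`_2) E.
  by rewrite /= mulrDr (mulrA r 'X^2) (mulrA r 'X^3) !coefD !coefMC !coefMXn coefXn /= !(mul0r, add0r, addr0).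
- have := congr1 (fun p : {poly {poly F}} => p`_3) E.
  by rewrite /= mulrDr (mulrA r 'X^2) (mulrA r 'X^3) !coefD !coefMC !coefMXn coefXn /= mul1r addr0 subnn.
Qed.

Lemma lower (F : fieldType) (f h : {poly F}) (P a t n M : nat) :
  (1 < size f)%N -> (a <= P)%N -> (M <= a)%N -> (M <= P)%N ->
  (forall r0 : {poly F}, f ^+ M %| (r0 * f ^+ (P - a)) * (f ^+ t * h)) ->
  in_R4w_ideal (f ^+ P) ('X^2 * (f ^+ a)%:P + 'X^3 * (f ^+ t * h)%:P)
     ('X^3 * (f ^+ n)%:P) -> (M <= n)%N.
Proof.
move=> sf aP Ma MP HB [r [q1 [q2 E]]].
have [E2 E3] := @coef_eqs _ _ _ _ _ _ _ _ E.
have f0 : f != 0 by rewrite -size_poly_gt0 (ltn_trans _ sf).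
have fa0 : f ^+ a != 0 by rewrite expf_neq0.
have r0E : r`_0 = - q2`_2 * f ^+ (P - a).
  apply: (mulIf fa0); rewrite -mulrA -exprD subnK // mulNr.
  by apply/eqP; rewrite -subr_eq0 opprK eq_sym; apply/eqP.
have Hd : f ^+ M %| f ^+ n.
  rewrite E3; apply: dvdp_add; first apply: dvdp_add.
  - by apply: dvdp_mull; apply: dvdp_exp2l.
  - by rewrite r0E; apply: HB.
  - by apply: dvdp_mull; apply: dvdp_exp2l.
rewrite leqNgt; apply/negP => nM.
move: Hd; rewrite -(subnK (ltnW nM)) exprD -{2}(mul1r (f ^+ n)).
rewrite dvdp_mul2r ?expf_neq0 // => H1.
have : f %| 1.
  apply: dvdp_trans H1; rewrite -{1}(expr1 f); apply: dvdp_exp2l.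
  by rewrite subn_gt0.
by rewrite dvdp1 => /eqP E1; rewrite E1 in sf.
Qed.

Lemma alg (R : comRingType) (X e fa ft h k c : R) : h * k = 1 + c * (e * fa) ->
  X ^+ 3 * (e * ft) = (e * k) * (X ^+ 2 * fa + X ^+ 3 * (ft * h)) + 0 * X ^+ 4
     + (- (X ^+ 2 * k + X ^+ 3 * (e * ft * c))) * (e * fa).
Proof.
move=> H.
have -> : (e * k) * (X ^+ 2 * fa + X ^+ 3 * (ft * h)) + 0 * X ^+ 4
     + (- (X ^+ 2 * k + X ^+ 3 * (e * ft * c))) * (e * fa)
   = X ^+ 3 * (e * ft) + X ^+ 3 * e * ft * (h * k - 1 - c * (e * fa)) by ring.
by rewrite H; ring.
Qed.

Lemma alg2 (R : comRingType) (X fa b z : R) :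
  X ^+ 3 * fa = X * (X ^+ 2 * fa + X ^+ 3 * b) + (- b) * X ^+ 4 + 0 * z.
Proof. ring. Qed.

Theorem proposition4p1 (p m s : nat) (F : finFieldType) (f h : {poly F}) (a t : nat) :
  prime p -> (0 < m)%N -> #|F| = (p ^ m)%N ->
  irreducible_poly f ->
  (t < a)%N -> (a <= p ^ s - 1)%N ->
  (R1w_zero (f ^+ (p ^ s)) h \/ R1w_unit (f ^+ (p ^ s)) h) ->
  let w := f ^+ (p ^ s) in
  let g : {poly {poly F}} := 'X^2 * (f ^+ a)%:P + 'X^3 * (f ^+ t * h)%:P in
  let L := if R1w_zero w h then a else minn a (p ^ s - a + t) in
  in_R4w_ideal w g ('X^3 * (f ^+ L)%:P) /\
  (forall n : nat, (n < L)%N -> ~ in_R4w_ideal w g ('X^3 * (f ^+ n)%:P)).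

Proof.
move=> pp m0 card irr ta aP hyp w g L.
have aP' : (a <= p ^ s)%N by apply: leq_trans aP (leq_subr _ _).
have sf : (1 < size f)%N by case: irr.
have wE : w = f ^+ (p ^ s - a) * f ^+ a by rewrite /w -exprD subnK.
split.
- rewrite /L; case: ifP => hz.
    by exists 'X, (- (f ^+ t * h)%:P), 0; apply: alg2.
  have [k /dvdpP [c Hc]] : R1w_unit w h by case: hyp => //; rewrite -/w hz.
  case: (leqP a (p ^ s - a + t)) => la.
    by exists 'X, (- (f ^+ t * h)%:P), 0; apply: alg2.

  exists (f ^+ (p ^ s - a) * k)%:P, 0,
    (- ('X ^+ 2 * k%:P + 'X ^+ 3 * ((f ^+ (p ^ s - a))%:P * (f ^+ t)%:P * c%:P))).
  rewrite /g wE exprD !polyCM; apply: alg.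
  rewrite -!polyCM -polyCD -wE; congr (_%:P).
  by move/eqP: Hc; rewrite subr_eq addrC => /eqP.
- move=> n nL H.
  have : (L <= n)%N; last by rewrite leqNgt nL.
  apply: (@lower F f h (p ^ s) a t n L) => //.
  + rewrite /L; case: ifP => _ //; exact: geq_minl.
  + apply: leq_trans aP'; rewrite /L; case: ifP => _ //; exact: geq_minl.
  + move=> r0; rewrite /L; case: ifP => hz.
      apply: dvdp_mull; apply: dvdp_mull.
      exact: dvdp_trans (dvdp_exp2l _ aP') hz.
    have -> : r0 * f ^+ (p ^ s - a) * (f ^+ t * h) = r0 * f ^+ (p ^ s - a + t) * h.
      by rewrite exprD !mulrA.
    apply: dvdp_mulr; apply: dvdp_mull; apply: dvdp_exp2l; exact: geq_minr.
Qed.
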